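(* The size $\gamma$ of the smallest string attractor satisfies the following lower bounds on its sensitivity (the alphabet being allowed to contain as many distinct characters as needed): substitutions: $\liminf_{n\to\infty}\mathsf{MS}_{\mathrm{sub}}(\gamma,n) \geq 2$, $\mathsf{AS}_{\mathrm{sub}}(\gamma,n) \geq \gamma-2$ and $\mathsf{AS}_{\mathrm{sub}}(\gamma,n)=\Omega(\sqrt{n})$; insertions: $\liminf_{n\to\infty}\mathsf{MS}_{\mathrm{ins}}(\gamma,n) \geq 2$, $\mathsf{AS}_{\mathrm{ins}}(\gamma,n) \geq \gamma-2$ and $\mathsf{AS}_{\mathrm{ins}}(\gamma,n)=\Omega(\sqrt{n})$; deletions: $\liminf_{n\to\infty}\mathsf{MS}_{\mathrm{del}}(\gamma,n) \geq 2$, $\mathsf{AS}_{\mathrm{del}}(\gamma,n) \geq \gamma-3$ and $\mathsf{AS}_{\mathrm{del}}(\gamma,n)=\Omega(\sqrt{n})$.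
   Context: Strings are finite sequences over an alphabet $\Sigma$; $\Sigma^n$ is the set of strings of length $n$; $\mathsf{ed}$ is the edit distance (single-character substitutions, insertions, deletions). For a measure $C$ on strings: $\mathsf{MS}_{\mathrm{sub}}(C,n)=\max_{T\in\Sigma^n}\{C(T')/C(T): T'\in\Sigma^n,\ \mathsf{ed}(T,T')=1\}$; $\mathsf{MS}_{\mathrm{ins}}$, $\mathsf{MS}_{\mathrm{del}}$ the same with $T'\in\Sigma^{n+1}$, resp. $\Sigma^{n-1}$; $\mathsf{AS}_{\ast}$ the same with $C(T')-C(T)$. A bound of the form ''$\mathsf{AS}(\gamma,n)\ge \gamma-c$'' means that there are strings $T$ (with $\gamma(T)$ arbitrarily large) and $T'$ with $\mathsf{ed}(T,T')=1$ of the relevant type such that $\gamma(T')-\gamma(T)\ge\gamma(T)-c$. A string attractor of $T$ is a set $\Gamma$ of positions of $T$ such that every substring of $T$ has an occurrence $T[i..j]$ with $\Gamma\cap[i,j]\neq\emptyset$; $\gamma(T)$ is the minimum size of a string attractor of $T$. *)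

(* Defs.v *)
From Stdlib Require Import Reals.
From mathcomp Require Import all_boot.

Set Implicit Arguments.
Unset Strict Implicit.
Unset Printing Implicit Defensive.

(* Alphabet: nat (as many distinct characters as needed).  Strings: seq nat. *)

Fixpoint ed (s t : seq nat) : nat :=
  match s with
  | [::] => size t
  | a :: s' =>
    let fix aux (t : seq nat) : nat :=
      match t with
      | [::] => (size s').+1
      | b :: t' => minn (minn (ed s' t).+1 (aux t').+1) (ed s' t' + (a != b))
      end
    in aux t
  end.

Definition is_attractor (T : seq nat) (G : {set 'I_(size T)}) : bool :=
  [forall i : 'I_(size T), forall j : 'I_(size T),
     (i <= j) ==>
     [exists i' : 'I_(size T),
        [&& i' + (j - i) < size T,
            take (j - i).+1 (drop i' T) == take (j - i).+1 (drop i T)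
          & [exists k in G, (i' <= k) && (k <= i' + (j - i))]]]].

(* gamma T = minimum size of a string attractor of T (the full position set is
   an attractor of size |T|, so the default value size T is never below it). *)
Definition gamma (T : seq nat) : nat :=
  \big[minn/size T]_(G : {set 'I_(size T)} | is_attractor G) #|G|.

Inductive edit_kind := ESub | EIns | EDel.

Definition new_len (k : edit_kind) (n : nat) : nat :=
  match k with ESub => n | EIns => n.+1 | EDel => n.-1 end.

Definition one_edit (k : edit_kind) (T T' : seq nat) : Prop :=
  ed T T' = 1 /\ size T' = new_len k (size T).

(* liminf_{n -> oo} MS_k(gamma, n) >= c, with MS_k(gamma,n) the maximum of
   gamma(T')/gamma(T) over T of length n and one-edit T', unfolded. *)
Definition MS_liminf_ge (k : edit_kind) (c : R) : Prop :=
  forall eps : R, Rlt 0 eps ->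
  exists N : nat, forall n : nat, (N <= n)%N ->
  exists T T' : seq nat, size T = n /\ one_edit k T T' /\
    Rle (Rminus c eps) (Rdiv (INR (gamma T')) (INR (gamma T))).

(* AS_k(gamma,n) >= gamma - c : there are T with gamma(T) arbitrarily large
   and one-edit T' with gamma(T') - gamma(T) >= gamma(T) - c. *)
Definition AS_ge_gamma_minus (k : edit_kind) (c : nat) : Prop :=
  forall m : nat, exists T T' : seq nat, one_edit k T T' /\
    (m <= gamma T)%N /\
    Rle (Rminus (INR (gamma T)) (INR c))
        (Rminus (INR (gamma T')) (INR (gamma T))).

Definition AS_Omega_sqrt (k : edit_kind) : Prop :=
  exists c : R, Rlt 0 c /\ exists N : nat, forall n : nat, (N <= n)%N ->
  exists T T' : seq nat, size T = n /\ one_edit k T T' /\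
    Rle (Rmult c (sqrt (INR n))) (Rminus (INR (gamma T')) (INR (gamma T))).

(* Main.v *)
Require Import Defs.
From Stdlib Require Import Reals Lra ZArith.
From mathcomp Require Import all_boot.
From mathcomp Require Import zify.
Set Implicit Arguments.
Unset Strict Implicit.
Unset Printing Implicit Defensive.

Lemma ed_cc a s b t : ed (a::s) (b::t) =
  minn (minn (ed s (b::t)).+1 (ed (a::s) t).+1) (ed s t + (a != b)).
Proof. by []. Qed.
Lemma ed_cn a s : ed (a::s) [::] = (size s).+1.
Proof. by []. Qed.
Lemma ed_nt t : ed [::] t = size t.
Proof. by []. Qed.

Lemma ed_cons_same x s t : ed (x :: s) (x :: t) <= ed s t.
Proof. rewrite ed_cc eqxx addn0. apply: geq_minr. Qed.

Lemma ed_refl s : ed s s = 0.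
Proof.
elim: s => [|x s IH] //. 
have := ed_cons_same x s s. by rewrite IH leqn0 => /eqP.
Qed.

Lemma ed_cat p s t : ed (p ++ s) (p ++ t) <= ed s t.
Proof.
elim: p => [|x p IH] //=. apply: leq_trans IH. exact: ed_cons_same.
Qed.

Lemma ed_sub x y s : ed (x :: s) (y :: s) <= 1.
Proof. rewrite ed_cc ed_refl add0n. apply: leq_trans (geq_minr _ _) _. by case: (x != y). Qed.

Lemma ed_ins x s : ed s (x :: s) <= 1.
Proof.
case: s => [|y s] //. rewrite ed_cc.
apply: leq_trans (geq_minl _ _) _. apply: leq_trans (geq_minr _ _) _.
by rewrite ed_refl.
Qed.

Lemma ed_del x s : ed (x :: s) s <= 1.
Proof.
case: s => [|y s]; first by rewrite ed_cn.
rewrite ed_cc.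
apply: leq_trans (geq_minl _ _) _. apply: leq_trans (geq_minl _ _) _.
by rewrite ed_refl.
Qed.

Lemma ed_eq0 s t : ed s t = 0 -> s = t.
Proof.
elim: s t => [|x s IH] [|y t] //.
rewrite ed_cc => H.
  have /eqP : ed s t + (x != y) = 0 by move: H; set u := (x != y) : nat; lia.
  rewrite addn_eq0 => /andP[/eqP H1 H2]. 
  rewrite (IH _ H1). by move: H2; rewrite eqb0 negbK => /eqP ->.
Qed.
Lemma bigmin_le (I : eqType) (r : seq I) (P : pred I) (F : I -> nat) x j :
  j \in r -> P j -> \big[minn/x]_(i <- r | P i) F i <= F j.
Proof.
elim: r => [|a r IH] //. rewrite inE big_cons => /orP [/eqP <-|Hj] Pj.
  by rewrite Pj geq_minl.
case: (P a); last exact: IH Hj Pj.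
exact: leq_trans (geq_minr _ _) (IH Hj Pj).
Qed.

Lemma gamma_le T (G : {set 'I_(size T)}) : is_attractor G -> gamma T <= #|G|.
Proof. move=> HG; rewrite /gamma. apply: bigmin_le => //; exact: mem_index_enum. Qed.

Lemma gamma_ge T K : K <= size T ->
  (forall G : {set 'I_(size T)}, is_attractor G -> K <= #|G|) -> K <= gamma T.
Proof.
move=> H1 H2; rewrite /gamma; elim/big_rec: _ => // G x HG Hx.
by rewrite leq_min H2.
Qed.

Lemma take_drop_eq S i i' k : i + k < size S -> i' + k < size S ->
  (forall t, t <= k -> nth 0 S (i'+t) = nth 0 S (i+t)) ->
  take k.+1 (drop i' S) = take k.+1 (drop i S).
Proof.
move=> Hi Hi' H. apply: (@eq_from_nth _ 0).
  rewrite !size_takel ?size_drop //; lia.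
move=> t; rewrite size_takel ?size_drop; last by lia.
move=> Ht. rewrite !nth_take // !nth_drop. by apply: H.
Qed.

Lemma take_drop_nth S i i' k t : 
  take k.+1 (drop i' S) = take k.+1 (drop i S) -> t <= k ->
  nth 0 S (i'+t) = nth 0 S (i+t).
Proof.
move=> H Ht. have := congr1 (fun s => nth 0 s t) H => /=.
by rewrite !nth_take // !nth_drop.
Qed.

Lemma attr_of (S : seq nat) (Gs : seq nat) :
 (forall i k, i + k < size S -> exists i', [/\ i' + k < size S,
    (forall t, t <= k -> nth 0 S (i'+t) = nth 0 S (i+t)) &
    exists2 x, x \in Gs & i' <= x <= i'+k]) ->
 gamma S <= size Gs.
Proof.
move=> H.
pose G : {set 'I_(size S)} := [set x in pmap insub Gs].
have HG : is_attractor G.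
  apply/forallP => i; apply/forallP => j; apply/implyP => Hij.
  have [|i' [H1 H2 [x Hx Hx2]]] := H i (j - i); first by have := ltn_ord j; lia.
  apply/existsP; exists (Ordinal (leq_ltn_trans (leq_addr _ _) H1)).
  apply/and3P; split => //=.
    apply/eqP; apply: take_drop_eq => //; have := ltn_ord j; lia.
  have Hxs : x < size S by lia.
  apply/existsP; exists (Ordinal Hxs). 
  by rewrite inE mem_pmap_sub /= Hx.
apply: leq_trans (gamma_le HG) _.
rewrite cardsE. apply: leq_trans (card_size _) _.
rewrite size_pmap_sub. exact: count_size.
Qed.

Definition good S K (s k : nat -> nat) (P : nat -> nat -> bool) :=
 [/\ forall m, m < K -> s m + k m < size S,
     forall m i' x, m < K -> i' + k m < size S ->
       (forall t, t <= k m -> nth 0 S (i'+t) = nth 0 S (s m + t)) ->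
       i' <= x <= i' + k m -> P m x
   & forall m m' x, m < K -> m' < K -> P m x -> P m' x -> m = m'].

Lemma good_gamma S K s k P : good S K s k P -> K <= gamma S.
Proof.
case=> H0 H1 H2.
have Ps : forall m, m < K -> P m (s m).
  move=> m Hm. apply: (H1 m (s m)) => //; first exact: H0.
  by rewrite leqnn leq_addr.
apply: gamma_ge.
  have Hf : forall m : 'I_K, s m < size S.
    move=> m. have := H0 m (ltn_ord m); lia.
  pose f (m : 'I_K) : 'I_(size S) := Ordinal (Hf m).
  have finj : injective f.
    move=> m m' E. have /= E' := congr1 val E. apply: val_inj => /=.
    apply: (H2 _ _ (s m)) => //; first by apply: Ps.
    by rewrite E'; apply: Ps.
  by have := leq_card f finj; rewrite !card_ord.
move=> G HG.
pose f (m : 'I_K) : option 'I_(size S) := [pick x in G | P m x].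
have fin : forall m : 'I_K, exists2 x, x \in G & P m x.
  move=> m.
  have Hm := H0 m (ltn_ord m).
  have Hs : s m < size S by lia.
  have Hj : s m + k m < size S by lia.
  move/forallP: HG => /(_ (Ordinal Hs)) /forallP /(_ (Ordinal Hj)) /implyP /=.
  rewrite leq_addr => /(_ isT) /existsP [i' /and3P [Hi' /eqP Ht /existsP [x /andP [Hx Hx2]]]].
  exists x => //. move: Hi' Ht Hx2; rewrite addKn => Hi' Ht Hx2.
  apply: (H1 m i') => //.
  move=> t Htk. exact: (take_drop_nth Ht Htk).
have fS : forall m : 'I_K, exists2 x, f m = Some x & (x \in G) && P m x.
  move=> m; rewrite /f. case: pickP => [x Hx|Hn]; first by exists x.
  by case: (fin m) => x Hx Px; have := Hn x; rewrite Hx Px.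
have finj : injective f.
  move=> m m' E. case: (fS m) => x Ex /andP [Hx Px]. case: (fS m') => y Ey /andP [Hy Py].
  move: E; rewrite Ex Ey => -[Exy]. subst y. apply: val_inj.
  exact: (H2 _ _ x (ltn_ord m) (ltn_ord m') Px Py).
have Hsub : [set f m | m in 'I_K] \subset [set Some x | x in G].
  apply/subsetP => o /imsetP [m _ ->]. case: (fS m) => x -> /andP [Hx _].
  by apply/imsetP; exists x.
have := subset_leq_card Hsub. rewrite !card_imset //; last exact: Some_inj.
by rewrite card_ord.
Qed.
Definition h g y :=
  if y < g.+1 then 0 else
  let z := y - g.+1 in
  if z %% g.+3 == 0 then z %/ g.+3 + 3
  else if z %% g.+3 == z %/ g.+3 + 2 then 1 else 0.

Definition M g := g.+1 + g * g.+3.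

Lemma h_small g y : y < g.+1 -> h g y = 0.
Proof. by rewrite /h => ->. Qed.

Lemma hq g q r : r < g.+3 ->
  h g (g.+1 + q * g.+3 + r) = if r == 0 then q + 3 else if r == q + 2 then 1 else 0.
Proof.
move=> Hr. rewrite /h ifF; last by lia.
have -> : g.+1 + q * g.+3 + r - g.+1 = q * g.+3 + r by lia.
rewrite divnMDl // modnMDl divn_small // modn_small // addn0.
done.
Qed.

Lemma decomp g y : g.+1 <= y -> y < M g ->
  exists q r, [/\ q < g, r < g.+3 & y = g.+1 + q * g.+3 + r].
Proof.
move=> H1 H2. exists ((y - g.+1) %/ g.+3), ((y - g.+1) %% g.+3).
have E := divn_eq (y - g.+1) g.+3.
split; last by lia.
- rewrite ltn_divLR //. rewrite /M in H2. lia.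
- by rewrite ltn_mod.
Qed.

Lemma hd g q : q < g -> h g (g.+1 + q * g.+3) = q + 3.
Proof. move=> _; have := @hq g q 0 isT; rewrite addn0 => ->; done. Qed.

Lemma hb g q : q < g -> h g (g.+1 + q * g.+3 + q.+2) = 1.
Proof. move=> Hq. rewrite hq; last by lia. by rewrite addn2 eqxx. Qed.

Lemma ha g q r : 0 < r < g.+3 -> r != q + 2 -> h g (g.+1 + q * g.+3 + r) = 0.
Proof. move=> /andP [H0 Hr] Hne. rewrite hq //. rewrite ifF ?ifF //; lia. Qed.

Lemma h_vals g y : h g y = 0 \/ h g y = 1 \/ 3 <= h g y.
Proof.
rewrite /h. case: ifP => _; first by left.
case: ifP => _; first by right; right; rewrite leq_addl.
case: ifP => _; by [right; left | left].
Qed.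

Lemma h_ge2 g y : y < M g -> 2 <= h g y ->
  exists q, [/\ q < g, y = g.+1 + q * g.+3 & h g y = q + 3].
Proof.
move=> Hy H2. case: (ltnP y g.+1) => Hy1; first by rewrite h_small in H2.
have [q [r [Hq Hr Ey]]] := decomp Hy1 Hy. subst y.
move: H2; rewrite hq //.
case: eqP => [Er|Hr0]; first by subst r; exists q; rewrite !addn0.
by case: (r == q + 2).
Qed.

Lemma h_eq1 g y : y < M g -> h g y = 1 ->
  exists q, q < g /\ y = g.+1 + q * g.+3 + q.+2.
Proof.
move=> Hy H2. case: (ltnP y g.+1) => Hy1; first by rewrite h_small in H2.
have [q [r [Hq Hr Ey]]] := decomp Hy1 Hy. subst y.
move: H2; rewrite hq //.
case: eqP => [->|Hr0]; first by lia.
case: eqP => [->|//] _. exists q; split => //; lia.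
Qed.

Lemma mul_le_w a b w : a <= b -> a * w <= b * w.
Proof. move=> H; exact: leq_mul H (leqnn w). Qed.

Lemma h_win g i : g.+1 <= i -> i + g < M g -> exists t, t <= g /\ h g (i + t) != 0.
Proof.
move=> H1 H2. have [q [r [Hq Hr Ei]]] := decomp H1 (leq_ltn_trans (leq_addr _ _) H2).
have [r0|rpos] := posnP r.
  exists 0; split => //. rewrite addn0 Ei r0 addn0 hd //; lia.
case: (leqP r q.+2) => Hrq.
  exists (q.+2 - r). split; first by lia.
  have -> : i + (q.+2 - r) = g.+1 + q * g.+3 + q.+2 by lia.
  by rewrite hb.
exists (g.+3 - r); split; first by lia.
have E : i + (g.+3 - r) = g.+1 + q.+1 * g.+3 by rewrite mulSn; lia.
have Hq1 : q.+1 < g.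
  have : g.+1 + q.+1 * g.+3 < M g by rewrite -E; lia.
  rewrite /M ltn_add2l ltn_pmul2r //.
by rewrite E hd.
Qed.

Definition rest g := mkseq (h g) (M g).
Definition Sof (pre : seq nat) g := pre ++ rest g.

Lemma size_Sof pre g : size (Sof pre g) = size pre + M g.
Proof. by rewrite size_cat size_mkseq. Qed.

Lemma c_pre pre g x : x < size pre -> nth 0 (Sof pre g) x = nth 0 pre x.
Proof. move=> H; by rewrite nth_cat H. Qed.

Lemma c_rest pre g y : y < M g -> nth 0 (Sof pre g) (size pre + y) = h g y.
Proof. move=> H; by rewrite nth_cat ltnNge leq_addr /= addKn nth_mkseq. Qed.

Lemma c_split pre g x : size pre <= x -> x < size pre + M g ->
  nth 0 (Sof pre g) x = h g (x - size pre).
Proof. move=> H1 H2. rewrite -{1}(subnKC H1) c_rest //; lia. Qed.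

Lemma lt_mul a b w : a < b -> a * w.+1 + w.+1 <= b * w.+1.
Proof. move=> H. have := mul_le_w w.+1 H. rewrite mulSn. lia. Qed.

Lemma good_d pre g : (forall x, x < size pre -> nth 0 pre x < 3) ->
  good (Sof pre g) g (fun j => size pre + g.+1 + j * g.+3) (fun _ => 0)
    (fun j x => x == size pre + g.+1 + j * g.+3).
Proof.
move=> Hpre. split.
- move=> m Hm. rewrite size_Sof /M. have := lt_mul (g.+2) Hm. lia.
- move=> m i' x Hm Hi' Ht Hx.
  have := Ht 0 (leqnn 0). rewrite !addn0 -addnA c_rest; last first.
    rewrite /M. have := lt_mul (g.+2) Hm. lia.
  rewrite hd //.
  rewrite size_Sof in Hi'.
  case: (ltnP i' (size pre)) => Hi1.
    rewrite c_pre // => E. have := Hpre _ Hi1. rewrite E. lia.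
  rewrite c_split //; last by lia.
  move=> E. have Y1 : i' - size pre < M g by lia.
  have Y2 : 2 <= h g (i' - size pre) by rewrite E; lia.
  have [q [Hq Eq Hv]] := h_ge2 Y1 Y2.
  have qm : q = m by lia.
  subst q. apply/eqP. lia.
- move=> m m' x Hm Hm' /eqP -> /eqP E.
  apply/eqP. rewrite -(@eqn_pmul2r g.+3) //. apply/eqP. lia.
Qed.

Lemma pattA pre g m t : m < g -> t <= g.+1 ->
  nth 0 (Sof pre g) (size pre + g.+1 + m * g.+3 + 1 + t) = (t == m.+1 : nat).
Proof.
move=> Hm Ht.
have -> : size pre + g.+1 + m * g.+3 + 1 + t = size pre + (g.+1 + m * g.+3 + t.+1) by lia.
rewrite c_rest; last by rewrite /M; have := lt_mul (g.+2) Hm; lia.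
rewrite hq; last by lia.
case: eqP => [//|_]. case: eqP => [E|NE].
  by have -> : t == m.+1 by apply/eqP; lia.
by have -> : t == m.+1 = false by apply/eqP; lia.
Qed.

Lemma good_A pre g :
  (forall x, x < size pre -> nth 0 pre x = 1 -> 0 < x /\ nth 0 pre x.-1 != 0) ->
  good (Sof pre g) g (fun j => size pre + g.+1 + j * g.+3 + 1) (fun _ => g.+1)
    (fun j x => (size pre + g.+1 + j * g.+3 + 1 <= x) &&
                (x <= size pre + g.+1 + j * g.+3 + 1 + g.+1)).
Proof.
move=> Hpre. split.
- move=> m Hm. rewrite size_Sof /M. have := lt_mul (g.+2) Hm. lia.
- move=> m i' x Hm Hi' Ht Hx.
  rewrite size_Sof in Hi'.
  have Hz : forall t, t <= g.+1 -> t != m.+1 -> nth 0 (Sof pre g) (i' + t) = 0.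
    move=> t Ht1 Ht2. rewrite Ht // pattA //. by rewrite (negbTE Ht2).
  have Hb : nth 0 (Sof pre g) (i' + m.+1) = 1.
    rewrite Ht ?pattA ?eqxx //; lia.
  have Hbeta : size pre <= i' + m.+1.
    rewrite leqNgt; apply/negP => Hlt.
    move: Hb; rewrite c_pre // => Hb.
    have [_ Hne] := Hpre _ Hlt Hb.
    have := Hz m. rewrite c_pre; last by lia.
    move: Hne. have -> : (i' + m.+1).-1 = i' + m by lia.
    move=> Hne H; move: Hne; rewrite H //; lia.
  move: Hb; rewrite c_split //; last by lia.
  move=> Hb. have [|q [Hq Eq]] := h_eq1 _ Hb; first by lia.
  have qm : q = m.
    case: (ltngtP q m) => // Hqm.
    + have := lt_mul (g.+2) Hqm => Hmul.
      have := Hz (m - q - 1). 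
      have -> : i' + (m - q - 1) = size pre + (g.+1 + q * g.+3) by lia.
      rewrite c_rest ?hd //.
        move=> H. have : q + 3 = 0 by apply: H; [lia | apply/eqP; lia]. lia.
      rewrite /M; have := lt_mul (g.+2) Hq; lia.
    + have := lt_mul (g.+2) Hqm => Hmul'.
      have E : i' + (m + g.+2 - q) = size pre + (g.+1 + q.+1 * g.+3) by rewrite mulSn; lia.
      have Hq1 : q.+1 < g.
        have : g.+1 + q.+1 * g.+3 < M g by lia.
        rewrite /M ltn_add2l ltn_pmul2r //.
      have := Hz (m + g.+2 - q).
      rewrite E c_rest ?hd //.
        move=> H. have : q.+1 + 3 = 0 by apply: H; [lia | apply/eqP; lia]. lia.
      rewrite /M; have := lt_mul (g.+2) Hq1; lia.
  subst q. apply/andP; split; lia.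
- move=> m m' x Hm Hm' /andP [H1 H2] /andP [H3 H4].
  case: (ltngtP m m') => // Hmm.
  + have := lt_mul (g.+2) Hmm. lia.
  + have := lt_mul (g.+2) Hmm. lia.
Qed.

Lemma good_cat S K1 s1 k1 P1 K2 s2 k2 P2 :
  good S K1 s1 k1 P1 -> good S K2 s2 k2 P2 ->
  (forall m m' x, m < K1 -> m' < K2 -> P1 m x -> P2 m' x -> False) ->
  good S (K1 + K2) (fun m => if m < K1 then s1 m else s2 (m - K1))
    (fun m => if m < K1 then k1 m else k2 (m - K1))
    (fun m => if m < K1 then P1 m else P2 (m - K1)).
Proof.
case=> A0 A1 A2 [B0 B1 B2] HX. split.
- move=> m Hm. case: ifP => H; first exact: A0. apply: B0. lia.
- move=> m i' x Hm. case: ifP => H; first exact: A1. apply: B1. lia.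
- move=> m m' x Hm Hm'. case: ifP => H; case: ifP => H'.
  + exact: A2.
  + move=> P Q; exfalso; apply: (HX m (m' - K1) x) => //; lia.
  + move=> P Q; exfalso; apply: (HX m' (m - K1) x) => //; lia.
  + move=> P Q. have := B2 (m - K1) (m' - K1) x. 
    have HH : m - K1 = m' - K1 -> m = m' by lia.
    move=> H2; apply: HH; apply: H2 => //; lia.
Qed.

Lemma good1 S s0 k0 (P0 : nat -> bool) : s0 + k0 < size S ->
  (forall i' x, i' + k0 < size S ->
     (forall t, t <= k0 -> nth 0 S (i' + t) = nth 0 S (s0 + t)) ->
     i' <= x <= i' + k0 -> P0 x) ->
  good S 1 (fun _ => s0) (fun _ => k0) (fun _ => P0).
Proof.
move=> H0 H1; split => //.
- move=> m i' x _; exact: H1.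
- move=> m m' x; lia.
Qed.

Lemma good_c pre g : 0 < g ->
  good (Sof pre g) 1 (fun _ => size pre) (fun _ => g)
    (fun _ x => (x < size pre + g.+1) && (nth 0 (Sof pre g) x == 0)).
Proof.
move=> g0. apply: good1.
  rewrite size_Sof /M. have : 0 < g * g.+3 by rewrite muln_gt0 g0. lia.
move=> i' x Hi' Ht Hx.
rewrite size_Sof in Hi'.
have Hz : forall t, t <= g -> nth 0 (Sof pre g) (i' + t) = 0.
  move=> t Htg. rewrite Ht // c_rest ?h_small //; rewrite /M; lia.
apply/andP; split; last first.
  have -> : x = i' + (x - i') by lia. by rewrite Hz //; lia.
rewrite ltnNge; apply/negP => Hge.
case: (leqP i' (size pre + g.+1)) => Hi.
  have := Hz (size pre + g.+1 - i'). 
  have -> : i' + (size pre + g.+1 - i') = size pre + (g.+1 + 0 * g.+3) by lia.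
  rewrite c_rest ?hd //; first by move=> H; have := H ltac:(lia); lia.
  rewrite /M. have : 0 < g * g.+3 by rewrite muln_gt0 g0. lia.
have W1 : g.+1 <= i' - size pre by lia.
have W2 : i' - size pre + g < M g by lia.
have [t [Htg Hne]] := h_win W1 W2.
have := Hz t Htg. rewrite c_split; [|lia|lia].
have -> : i' + t - size pre = i' - size pre + t by lia.
by move=> E; rewrite E in Hne.
Qed.

Lemma good_dollar pre g L : L < size pre -> nth 0 pre L = 2 ->
  (forall x, x < size pre -> nth 0 pre x = 2 -> x = L) ->
  good (Sof pre g) 1 (fun _ => L) (fun _ => 0) (fun _ x => x == L).
Proof.
move=> HL H2 Hu. apply: good1.
  rewrite size_Sof addn0; lia.
move=> i' x Hi' Ht Hx.
have := Ht 0 (leqnn _). rewrite !addn0 (c_pre g HL) H2.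
rewrite size_Sof addn0 in Hi'.
have -> : x = i' by lia.
case: (ltnP i' (size pre)) => Hi.
  rewrite c_pre // => E. by rewrite (Hu _ Hi E).
rewrite c_split //. case: (h_vals g (i' - size pre)) => [->|[->|H3]] //.
move=> E; rewrite E in H3. done.
Qed.

Definition preT L := nseq L 0 ++ [:: 1].
Definition ST g L := Sof (preT L) g.

Lemma size_preT L : size (preT L) = L.+1.
Proof. by rewrite /preT size_cat size_nseq addn1. Qed.

Lemma nth_preT L x : nth 0 (preT L) x = (x == L : nat).
Proof.
rewrite /preT nth_cat size_nseq nth_nseq.
case: ltnP => H; first by case: eqP => //; lia.
case E: (x - L) => [|[|y]] /=.
- have Ex : x = L by lia. by rewrite Ex eqxx.
- by case: eqP => //; lia.
- by case: eqP => //; lia.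
Qed.

Section TFacts.
Variables g L : nat.
Hypothesis HL : g.+1 <= L.
Let S := ST g L.
Let c x := nth 0 S x.
Let n := L.+1 + M g.

Lemma size_ST : size S = n.
Proof. by rewrite /S /ST size_Sof size_preT. Qed.

Lemma cT_pre x : x <= L -> c x = (x == L : nat).
Proof. move=> H; rewrite /c /S /ST c_pre ?nth_preT // size_preT; lia. Qed.

Lemma cT_rest y : y < M g -> c (L.+1 + y) = h g y.
Proof. move=> H; rewrite /c /S /ST -(size_preT L) c_rest //. Qed.

Lemma cT_vals x : x < n -> c x = 0 \/ c x = 1 \/ 3 <= c x.
Proof.
move=> H. case: (leqP x L) => Hx.
  rewrite cT_pre //. case: (x == L); by [right; left | left].
have -> : x = L.+1 + (x - L.+1) by lia. rewrite cT_rest; last by lia.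
exact: h_vals.
Qed.

Lemma cT_d x : x < n -> 3 <= c x -> exists2 q, q < g & x = L.+1 + g.+1 + q * g.+3.
Proof.
move=> H. case: (leqP x L) => Hx.
  rewrite cT_pre //. by case: (x == L).
have -> : x = L.+1 + (x - L.+1) by lia. rewrite cT_rest; last by lia.
move=> H3. have Y1 : x - L.+1 < M g by lia.
have Y2 : 2 <= h g (x - L.+1) by lia.
have [q [Hq Eq _]] := h_ge2 Y1 Y2.
exists q => //; lia.
Qed.

Lemma cT_b x : x < n -> c x = 1 ->
  x = L \/ exists2 q, q < g & x = L.+1 + g.+1 + q * g.+3 + q.+2.
Proof.
move=> H. case: (leqP x L) => Hx.
  rewrite cT_pre //. case: eqP => //; by left.
have -> : x = L.+1 + (x - L.+1) by lia. rewrite cT_rest; last by lia.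
move=> H1. have Y1 : x - L.+1 < M g by lia.
have [q [Hq Eq]] := h_eq1 Y1 H1.
right; exists q => //; lia.
Qed.

Lemma cT_dval q : q < g -> c (L.+1 + g.+1 + q * g.+3) = q + 3.
Proof.
move=> Hq. rewrite -addnA cT_rest ?hd //. rewrite /M. have := lt_mul g.+2 Hq. lia.
Qed.

Lemma cT_mid x : L < x <= L + g.+1 -> c x = 0.
Proof.
move=> /andP [H1 H2]. have -> : x = L.+1 + (x - L.+1) by lia.
rewrite cT_rest ?h_small //; rewrite /M; lia.
Qed.

End TFacts.

Section TAttr.
Variables g L : nat.
Hypothesis HL : g.+1 <= L.
Local Notation S := (ST g L).
Local Notation c x := (nth 0 (ST g L) x).
Local Notation n := (L.+1 + M g).

Lemma two_b x y : x < y -> y < n -> c x = 1 -> c y = 1 ->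
  exists z, [/\ x < z, z < y & 3 <= c z].
Proof.
move=> Hxy Hy Hcx Hcy.
case: (cT_b HL Hy Hcy) => [Ey|[q' Hq' Ey]].
  case: (cT_b HL (ltn_trans Hxy Hy) Hcx) => [Ex|[q Hq Ex]]; lia.
exists (L.+1 + g.+1 + q' * g.+3). split; [ | lia | by rewrite cT_dval //; lia].
case: (cT_b HL (ltn_trans Hxy Hy) Hcx) => [Ex|[q Hq Ex]]; first lia.
case: (ltnP q q') => Hqq.
  have := lt_mul g.+2 Hqq; lia.
have := mul_le_w g.+3 Hqq; lia.
Qed.

Lemma gammaT_le : gamma S <= g.+2.
Proof.
have L1 : 1 <= L by lia.
have -> : g.+2 = size ([:: L.-1; L] ++ [seq L.+1 + g.+1 + q * g.+3 | q <- iota 0 g]).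
  by rewrite size_cat size_map size_iota.
apply: attr_of => i k. rewrite size_ST => Hik.
have Hn : n = L.+1 + g.+1 + g * g.+3 by rewrite /n /M; lia.
case: (boolP [exists t : 'I_k.+1, 3 <= c (i + t)]) => [/existsP [t Ht]|HA].
  exists i; split => //. exists (i + t); last by have := ltn_ord t; lia.
  have Hit : i + t < n by have := ltn_ord t; lia.
  have [q Hq Eq] := cT_d HL Hit Ht.
  rewrite mem_cat; apply/orP; right; apply/mapP; exists q => //.
  by rewrite mem_iota; lia.
have noD : forall u, u <= k -> c (i + u) < 3.
  move=> u Hu. have Hu' : u < k.+1 by lia.
  move/existsPn: HA => HA. have := HA (Ordinal Hu'). rewrite /= => H. by rewrite ltnNge.
have noDz : forall z, i <= z -> z <= i + k -> c z < 3.
  move=> z H1 H2. have := noD (z - i). have -> : i + (z - i) = z by lia. apply; lia.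
have vals : forall u, u <= k -> c (i + u) = 0 \/ c (i + u) = 1.
  move=> u Hu. have := noD u Hu. have Hin : i + u < n by lia.
  case: (cT_vals HL Hin) => [H|[H|H]]; [by left | by right | lia].
case: (boolP [exists t : 'I_k.+1, c (i + t) == 1]) => [/existsP [t /eqP Ht]|HB].
  have tk : t <= k by have := ltn_ord t; lia.
  have Hbn : i + t < n by lia.
  have Hc : forall u, u <= k -> u != t :> nat -> c (i + u) = 0.
    move=> u Hu Hne. case: (vals u Hu) => // H1.
    case: (ltngtP u t) => Hut.
    + have Y : i + u < i + t by lia.
      have [z [Z1 Z2 Z3]] := two_b Y Hbn H1 Ht.
      have := noDz z; lia.
    + have Y : i + t < i + u by lia. have Y2 : i + u < n by lia.
      have [z [Z1 Z2 Z3]] := two_b Y Y2 Ht H1.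
      have := noDz z; lia.
    + move: Hne; rewrite Hut eqxx //.
  have tL : t <= L.
    case: (cT_b HL Hbn Ht) => [E|[q Hq E]]; first lia.
    case: (leqP i (L.+1 + g.+1 + q * g.+3)) => Hi; last lia.
    have := noDz (L.+1 + g.+1 + q * g.+3).
    rewrite cT_dval //; lia.
  have ktg : k - t <= g.+1.
    case: (cT_b HL Hbn Ht) => [E|[q Hq E]].
      case: (posnP g) => [g0|gpos]; first by move: Hik; rewrite Hn g0; lia.
      case: (leqP (L.+1 + g.+1 + 0 * g.+3) (i + k)) => Hz; last lia.
      have := noDz (L.+1 + g.+1 + 0 * g.+3).
      rewrite cT_dval //; lia.
    case: (ltnP q.+1 g) => Hq1; last first.
      have Eg : g = q.+1 by lia. move: Hik; rewrite Hn Eg mulSn; lia.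
    case: (leqP (L.+1 + g.+1 + q.+1 * g.+3) (i + k)) => Hz; last by move: Hz; rewrite mulSn; lia.
    have := noDz (L.+1 + g.+1 + q.+1 * g.+3).
    rewrite cT_dval //; move: Hz; rewrite mulSn; lia.
  exists (L - t); split.
  - rewrite Hn. have : 0 <= g * g.+3 by []. lia.
  - move=> u Hu. case: (ltngtP u t) => Hut.
    + rewrite Hc //; last by rewrite neq_ltn Hut.
      rewrite cT_pre //; last lia. by case: eqP => //; lia.
    + rewrite Hc //; last by rewrite neq_ltn Hut orbT.
      rewrite cT_mid //; lia.
    + subst u. rewrite Ht. have -> : L - t + t = L by lia.
      by rewrite cT_pre // eqxx.
  - exists L; last lia. by rewrite mem_cat inE inE eqxx orbT.
have allz : forall u, u <= k -> c (i + u) = 0.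
  move=> u Hu. case: (vals u Hu) => // H1.
  have Hu' : u < k.+1 by lia.
  move/existsPn: HB => HB. have := HB (Ordinal Hu'). by rewrite /= H1.
have kL : k < L.
  rewrite ltnNge; apply/negP => Lk.
  case: (leqP i L) => Hi.
    have := allz (L - i). have -> : i + (L - i) = L by lia.
    rewrite cT_pre // eqxx => H; have := H ltac:(lia); done.
  case: (posnP g) => [g0|gpos]; first by move: Hik; rewrite Hn g0; lia.
  case: (leqP i (L.+1 + g.+1 + 0 * g.+3)) => Hi2.
    have := allz (L.+1 + g.+1 + 0 * g.+3 - i).
    have -> : i + (L.+1 + g.+1 + 0 * g.+3 - i) = L.+1 + g.+1 + 0 * g.+3 by lia.
    rewrite cT_dval // => H; have := H ltac:(lia); lia.
  have W1 : g.+1 <= i - L.+1 by lia.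
  have W2 : i - L.+1 + g < M g by rewrite /M; lia.
  have [t [Htg Hne]] := h_win W1 W2.
  have := allz t ltac:(lia).
  have -> : i + t = L.+1 + (i - L.+1 + t) by lia.
  rewrite cT_rest; last by rewrite /M; lia.
  move=> E; by rewrite E in Hne.
exists (L.-1 - k); split.
- rewrite Hn; lia.
- move=> u Hu. rewrite allz // (cT_pre HL); last lia. by have -> : (L.-1 - k + u == L) = false by apply/eqP; lia.
- exists L.-1; first by rewrite mem_cat inE eqxx.
  lia.
Qed.

End TAttr.

Lemma nth_nseq_cat L tl x :
  nth 0 (nseq L 0 ++ tl) x = if x < L then 0 else nth 0 tl (x - L).
Proof. by rewrite nth_cat size_nseq nth_nseq; case: ltnP. Qed.

Lemma good_core pre g : 0 < g ->
  (forall x, x < size pre -> nth 0 pre x < 3) ->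
  (forall x, x < size pre -> nth 0 pre x = 1 -> 0 < x /\ nth 0 pre x.-1 != 0) ->
  exists s k P, good (Sof pre g) (1 + (g + g)) s k P /\
    (forall m x, m < 1 + (g + g) -> P m x -> x < size pre -> nth 0 (Sof pre g) x = 0).
Proof.
move=> g0 C1 C2.
have Gd := good_d g C1. have GA := good_A g C2. have Gc := good_c pre g0.
have XdA : forall m m' x, m < g -> m' < g ->
   (fun j x => x == size pre + g.+1 + j * g.+3) m x ->
   (fun j x => (size pre + g.+1 + j * g.+3 + 1 <= x) &&
                (x <= size pre + g.+1 + j * g.+3 + 1 + g.+1)) m' x -> False.
  move=> m m' x Hm Hm' /= /eqP -> /andP [H1 H2].
  case: (leqP m m') => H; [move: (mul_le_w g.+3 H) | move: (lt_mul g.+2 H)]; lia.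
have G2 := good_cat Gd GA XdA.
have XcdA : forall m m' x, m < 1 -> m' < g + g ->
   (fun _ x => (x < size pre + g.+1) && (nth 0 (Sof pre g) x == 0)) m x ->
   (fun m => if m < g then (fun j x => x == size pre + g.+1 + j * g.+3) m
             else (fun j x => (size pre + g.+1 + j * g.+3 + 1 <= x) &&
                (x <= size pre + g.+1 + j * g.+3 + 1 + g.+1)) (m - g)) m' x -> False.
  move=> m m' x _ _ /= /andP [Hx _]. case: ifP => _ /=; first by move/eqP => E; lia.
  move/andP => [H1 _]. move: H1; set u := (_ - _) * _ => H1. lia.
have G3 := good_cat Gc G2 XcdA.
eexists; eexists; eexists; split; first exact: G3.
move=> m x Hm /=. case: ifP => Hm1 /=; first by move=> /andP [_ /eqP].
case: ifP => _ /=; first by move/eqP => E; lia.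
  move/andP => [H1 _]. move: H1; set u := (_ - _) * _ => H1. lia.
Qed.

Definition preS L := nseq L 0 ++ [:: 2].
Definition preI L := nseq L 0 ++ [:: 2; 1].
Definition preD L := nseq L 0.

Lemma size_preS L : size (preS L) = L.+1.
Proof. by rewrite /preS size_cat size_nseq addn1. Qed.
Lemma size_preI L : size (preI L) = L.+2.
Proof. by rewrite /preI size_cat size_nseq addn2. Qed.
Lemma size_preD L : size (preD L) = L.
Proof. by rewrite /preD size_nseq. Qed.

Lemma lb_dollar pre g L : 0 < g ->
  (forall x, x < size pre -> nth 0 pre x < 3) ->
  (forall x, x < size pre -> nth 0 pre x = 1 -> 0 < x /\ nth 0 pre x.-1 != 0) ->
  L < size pre -> nth 0 pre L = 2 ->
  (forall x, x < size pre -> nth 0 pre x = 2 -> x = L) ->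
  (g + g).+2 <= gamma (Sof pre g).
Proof.
move=> g0 C1 C2 HL H2 Hu.
have [s [k [P [G HP]]]] := good_core g0 C1 C2.
have Gdol := good_dollar g HL H2 Hu.
have X : forall m m' x, m < 1 -> m' < 1 + (g + g) -> (fun _ x => x == L) m x -> P m' x -> False.
  move=> m m' x _ Hm' /= /eqP Ex Px. have := HP m' x Hm' Px. rewrite Ex HL => /(_ isT).
  by rewrite c_pre // H2.
have := good_gamma (good_cat Gdol G X). lia.
Qed.

Lemma lb_core pre g : 0 < g ->
  (forall x, x < size pre -> nth 0 pre x < 3) ->
  (forall x, x < size pre -> nth 0 pre x = 1 -> 0 < x /\ nth 0 pre x.-1 != 0) ->
  (g + g).+1 <= gamma (Sof pre g).
Proof.
move=> g0 C1 C2. have [s [k [P [G HP]]]] := good_core g0 C1 C2.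
have := good_gamma G. lia.
Qed.

Lemma lbS g L : 0 < g -> (g + g).+2 <= gamma (Sof (preS L) g).
Proof.
move=> g0. apply: (lb_dollar (L := L)) => //; rewrite ?size_preS //.
- move=> x Hx. rewrite /preS nth_nseq_cat. case: (ltnP x L) => // H. by case: (x - L) => [|[|y]].
- move=> x Hx. rewrite /preS nth_nseq_cat. case: (ltnP x L) => // H. by case: (x - L) => [|[|y]].
- by rewrite /preS nth_nseq_cat ltnn subnn.
- move=> x Hx. rewrite /preS nth_nseq_cat. case: (ltnP x L) => // H. lia.
Qed.

Lemma lbI g L : 0 < g -> (g + g).+2 <= gamma (Sof (preI L) g).
Proof.
move=> g0. apply: (lb_dollar (L := L)) => //; rewrite ?size_preI //.
- move=> x Hx. rewrite /preI nth_nseq_cat. case: (ltnP x L) => // H.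
  by case E: (x - L) => [|[|y]] //; lia.
- move=> x Hx. rewrite /preI nth_nseq_cat. case: (ltnP x L) => // H.
  case E: (x - L) => [|[|y]] //= _; try lia.
  split; first lia. rewrite nth_nseq_cat ifF; last lia.
  by have -> : x.-1 - L = 0 by lia.
- by rewrite /preI nth_nseq_cat ltnn subnn.
- move=> x Hx. rewrite /preI nth_nseq_cat. case: (ltnP x L) => // H.
  case E: (x - L) => [|[|y]] //= _; lia.
Qed.

Lemma lbD g L : 0 < g -> (g + g).+1 <= gamma (Sof (preD L) g).
Proof.
move=> g0. apply: lb_core => //; rewrite ?size_preD.
- move=> x Hx. by rewrite /preD nth_nseq; case: ifP.
- move=> x Hx. by rewrite /preD nth_nseq; case: ifP.
Qed.

Lemma lbT g L : g <= gamma (ST g L).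
Proof.
have := good_gamma (@good_d (preT L) g _). apply.
move=> x Hx. rewrite nth_preT. by case: (x == L).
Qed.

Definition Tk k g L := match k with
  | ESub => Sof (preS L) g | EIns => Sof (preI L) g | EDel => Sof (preD L) g end.

Lemma ed_le1_ne0 s t : ed s t <= 1 -> s <> t -> ed s t = 1.
Proof. move=> H1 H2. case E: (ed s t) => [|[|x]]; [|done|by rewrite E in H1].
by have := ed_eq0 E. Qed.

Lemma one_edit_k k g L : one_edit k (ST g L) (Tk k g L).
Proof.
case: k; split.
- apply: ed_le1_ne0.
    rewrite /ST /Tk /Sof /preT /preS -!catA /=. apply: leq_trans (ed_cat _ _ _) _.
    exact: ed_sub.
  move=> E. have := congr1 (fun s => nth 0 s L) E.
  rewrite /ST /Tk /Sof /preT /preS -!catA !nth_nseq_cat ltnn subnn //.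
- by rewrite /ST /Tk !size_Sof size_preT size_preS.
- apply: ed_le1_ne0.
    rewrite /ST /Tk /Sof /preT /preI -!catA /=. apply: leq_trans (ed_cat _ _ _) _.
    have := ed_ins 2 (1 :: rest g). done.
  move=> E. have := congr1 size E. rewrite /ST /Tk !size_Sof size_preT size_preI. lia.
- by rewrite /ST /Tk !size_Sof size_preT size_preI.
- apply: ed_le1_ne0.
    rewrite /ST /Tk /Sof /preT /preD -!catA /=. apply: leq_trans (ed_cat _ _ _) _.
    have := ed_del 1 (rest g). done.
  move=> E. have := congr1 size E. rewrite /ST /Tk !size_Sof size_preT size_preD. lia.
- by rewrite /ST /Tk !size_Sof size_preT size_preD /=; lia.
Qed.

Lemma lb_k k g L : 0 < g -> (g + g).+1 + (if k is EDel then 0 else 1) <= gamma (Tk k g L).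
Proof.
move=> g0. case: k => /=.
- rewrite addn1. exact: lbS.
- rewrite addn1. exact: lbI.
- rewrite addn0. exact: lbD.
Qed.

Definition F g := M g + g + 2.

Lemma F_S x : F x.+1 = F x + 2 * x + 6.
Proof. rewrite /F /M !mulSn !mulnS. lia. Qed.

Lemma F_mono a b : a <= b -> F a <= F b.
Proof. move=> H. rewrite /F /M. have := leq_mul H H. have := leq_mul H (leqnn 3). lia. Qed.

Lemma pick_g n : F 1 <= n -> exists g, [/\ 0 < g, F g <= n & n < F g.+1].
Proof.
have F1 : F 1 = 9 by [].
have F2 : F 2 = 17 by [].
elim: n => [|n IH] H; first by move: H; rewrite F1.
case: (ltnP n (F 1)) => Hn.
  exists 1; split => //; move: H Hn; rewrite F1 F2; lia.
have [g [g0 H1 H2]] := IH Hn.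
case: (ltnP n.+1 (F g.+1)) => H3; first by exists g; split => //; lia.
exists g.+1; split => //.
have := F_S g.+1. lia.
Qed.

Lemma pick_g_ge n G0 : 0 < G0 -> F G0 <= n ->
  exists g, [/\ 0 < g, G0 <= g, F g <= n & n < F g.+1].
Proof.
move=> G1 Hn. have [|g [g0 H1 H2]] := pick_g (n := n).
  apply: leq_trans Hn; exact: F_mono.
exists g; split => //. rewrite leqNgt; apply/negP => Hg.
have := F_mono Hg. lia.
Qed.

Section Reals.
Local Open Scope R_scope.

Lemma INR_ub (r : R) : exists n : nat, (r <= INR n).
Proof.
have [H1 _] := archimed r.
case: (Z_lt_le_dec (up r) 0) => Hz.
  exists 0%N. simpl. have := IZR_lt _ _ Hz. lra.
exists (Z.to_nat (up r)). rewrite INR_IZR_INZ Z2Nat.id //. lra.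
Qed.

Lemma le_INR' a b : (a <= b)%N -> (INR a <= INR b).
Proof. move=> H; apply: le_INR; exact/leP. Qed.

Lemma INR_add a b : INR (a + b)%N = INR a + INR b.
Proof. exact: plus_INR. Qed.

Lemma MS_k k : MS_liminf_ge k (INR 2).
Proof.
move=> eps Heps.
have [G0 HG0] := INR_ub (3 / eps).
exists (F G0.+1) => n Hn.
have [g [g0 Hg HF1 HF2]] := pick_g_ge (isT : (0 < G0.+1)%N) Hn.
set L := (n - M g - 1)%N.
have HL : (g.+1 <= L)%N by rewrite /L; move: HF1; rewrite /F; lia.
exists (ST g L), (Tk k g L). split.
  rewrite /ST size_Sof size_preT /L. move: HF1; rewrite /F; lia.
split; first exact: one_edit_k.
have Hlo := lbT g L. have Hup := gammaT_le HL. have Hk := lb_k k L g0.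
set a := gamma (Tk k g L) in Hk *. set b := gamma (ST g L) in Hlo Hup *.
have Ha : (INR (g + g).+1 <= INR a).
  apply: le_INR'. lia.
have Hb1 : (INR G0 <= INR b) by apply: le_INR'; lia.
have Hb2 : (INR b <= INR g.+2) by apply: le_INR'.
rewrite S_INR INR_add in Ha. rewrite !S_INR in Hb2.
have Hb0 : (0 < INR b).
  have : (INR 1 <= INR b) by apply: le_INR'; lia. simpl; lra.
have HG : (3 <= eps * INR G0).
  have E : (3 / eps * eps = 3) by field; lra.
  have := Rmult_le_compat_r eps _ _ (Rlt_le _ _ Heps) HG0. rewrite E. lra.
have HeB : (3 <= eps * INR b).
  have := Rmult_le_compat_l eps _ _ (Rlt_le _ _ Heps) Hb1. lra.
have Key : ((INR 2 - eps) * INR b <= INR a).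
  simpl. lra.
apply: (Rmult_le_reg_r (INR b)) => //.
rewrite /Rdiv Rmult_assoc Rinv_l; last lra.
lra.
Qed.

Lemma uv k : ((if k is EDel then 0 else 1) + (if k is EDel then 3 else 2) = 3)%N.
Proof. by case: k. Qed.

Lemma AS_k k : AS_ge_gamma_minus k (if k is EDel then 3 else 2).
Proof.
move=> m. set g := m.+1. set L := g.+1.
have g0 : (0 < g)%N by [].
have HL : (g.+1 <= L)%N by [].
exists (ST g L), (Tk k g L). split; first exact: one_edit_k.
have Hlo := lbT g L. have Hup := gammaT_le HL. have Hk := lb_k k L g0.
split; first by apply: leq_trans _ Hlo; exact: leqnSn.
set a := gamma (Tk k g L) in Hk *. set b := gamma (ST g L) in Hlo Hup *.
have Huv := uv k.
have Hn : (b + b <= a + (if k is EDel then 3 else 2))%N.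
  move: Huv Hk. set u := (if k is EDel then 0 else 1). set v := (if k is EDel then 3 else 2). lia.
have := le_INR' Hn. rewrite !INR_add. lra.
Qed.

Lemma AS_sqrt_k k : AS_Omega_sqrt k.
Proof.
exists (1/2). split; first lra.
exists (F 6) => n Hn.
have [g [g0 Hg HF1 HF2]] := pick_g_ge (isT : (0 < 6)%N) Hn.
set L := (n - M g - 1)%N.
have HL : (g.+1 <= L)%N by rewrite /L; move: HF1; rewrite /F; lia.
exists (ST g L), (Tk k g L). split.
  rewrite /ST size_Sof size_preT /L. move: HF1; rewrite /F; lia.
split; first exact: one_edit_k.
have Hlo := lbT g L. have Hup := gammaT_le HL. have Hk := lb_k k L g0.
set a := gamma (Tk k g L) in Hk *. set b := gamma (ST g L) in Hlo Hup *.
set m := (g - 1)%N.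
have H1 : (b + m <= a)%N by move: Hk; set u := (if k is EDel then 0 else 1); rewrite /m; lia.
have H2 : (n <= (m + m) * (m + m))%N.
  have E := F_S g. 
  have Eg : g = (m + 1)%N by rewrite /m; lia.
  move: HF2 HF1 E Hg. rewrite Eg /F /M => HF2 HF1 E Hg. nia.
have R1 := le_INR' H1. rewrite INR_add in R1.
have R2 := le_INR' H2. rewrite mult_INR in R2.
have R3 := sqrt_le_1_alt _ _ R2. rewrite sqrt_square in R3; last exact: pos_INR.
rewrite INR_add in R3. lra.
Qed.

End Reals.

Theorem mainTheorem3 :
  (MS_liminf_ge ESub (INR 2) /\ AS_ge_gamma_minus ESub 2 /\ AS_Omega_sqrt ESub) /\
  (MS_liminf_ge EIns (INR 2) /\ AS_ge_gamma_minus EIns 2 /\ AS_Omega_sqrt EIns) /\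
  (MS_liminf_ge EDel (INR 2) /\ AS_ge_gamma_minus EDel 3 /\ AS_Omega_sqrt EDel).
Proof.
split; [|split].
- split; [exact: MS_k | split; [exact: (AS_k ESub) | exact: AS_sqrt_k]].
- split; [exact: MS_k | split; [exact: (AS_k EIns) | exact: AS_sqrt_k]].
- split; [exact: MS_k | split; [exact: (AS_k EDel) | exact: AS_sqrt_k]].
Qed.
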